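(* Fix a prime $p$ and $n\in\mathbb{N}$, and let $\Gamma_n=\frac1{p^n}\mathbb{Z}\times\frac1{p^n}\mathbb{Z}$. Define $\mathbb{L}^\Sigma_{p,n}:\Gamma_n\to[0,\infty)$ by $\mathbb{L}^\Sigma_{p,n}(\gamma_1,\gamma_2)=\mathbb{L}_{p,n}(\gamma_1)+\mathbb{L}_{p,n}(\gamma_2)$, where $\mathbb{L}_{p,n}$ is the restriction to $\frac1{p^n}\mathbb{Z}$ of $\mathbb{L}_p(r)=|r|+\|r\|_p$. Then $\mathbb{L}^\Sigma_{p,n}$ is a proper length function on $\Gamma_n$ that is of bounded doubling with constant $(4p^8)^4$.
   Context: $\|\cdot\|_p$ is the $p$-adic norm on $\mathbb{Q}$. A length function $\mathbb{L}$ on a discrete group satisfies $\mathbb{L}(\gamma)=0\iff\gamma=e$, $\mathbb{L}(\gamma^{-1})=\mathbb{L}(\gamma)$, $\mathbb{L}(\gamma\gamma')\le\mathbb{L}(\gamma)+\mathbb{L}(\gamma')$. With $B_{\mathbb{L}}(R)=\{\gamma:\mathbb{L}(\gamma)\le R\}$, $\mathbb{L}$ is proper if all $B_{\mathbb{L}}(R)$ are finite, and of bounded doubling with constant $C$ if it is proper and $|B_{\mathbb{L}}(2R)|\le C|B_{\mathbb{L}}(R)|$ for all $R\ge1$. *)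

(* Defs.v *)
From HB Require Import structures.
From mathcomp Require Import all_boot all_order all_algebra.
From mathcomp Require Import reals.
Set Implicit Arguments. Unset Strict Implicit. Unset Printing Implicit Defensive.
Import Order.TTheory GRing.Theory Num.Theory.
Local Open Scope ring_scope.

(* p-adic norm on Q: ||0||_p = 0, ||p^a u/v||_p = p^(-a) (u, v prime to p). *)
Definition padic_norm (p : nat) (r : rat) : rat :=
  if r == 0 then 0
  else (p%:R ^+ logn p `|denq r|%N) / (p%:R ^+ logn p `|numq r|%N).

Definition Lp (p : nat) (r : rat) : rat := `|r| + padic_norm p r.

(* Gamma_n = (1/p^n Z) x (1/p^n Z), realised via coordinates:
   (k1, k2) : int * int  represents  (k1 / p^n, k2 / p^n).
   This is an isomorphism of additive groups Z^2 -> Gamma_n. *)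
Definition gamma_coord (p n : nat) (k : int) : rat := k%:~R / (p%:R ^+ n).

Definition LSigma (R : realType) (p n : nat) (g : int * int) : R :=
  ratr (Lp p (gamma_coord p n g.1) + Lp p (gamma_coord p n g.2)).

Definition is_length_function (G : zmodType) (R : realType) (L : G -> R) : Prop :=
  (forall g, 0 <= L g) /\
  (forall g, L g = 0 <-> g = 0) /\
  (forall g, L (- g) = L g) /\
  (forall g h, L (g + h) <= L g + L h).

Definition enum_ball (G : zmodType) (R : realType) (L : G -> R) (r : R)
  (s : seq G) : Prop :=
  uniq s /\ forall g, g \in s <-> L g <= r.

Definition is_proper (G : zmodType) (R : realType) (L : G -> R) : Prop :=
  forall r : R, exists s : seq G, enum_ball L r s.

Definition bounded_doubling (G : zmodType) (R : realType) (L : G -> R) (C : R)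
  : Prop :=
  is_proper L /\
  forall (r : R) (s1 s2 : seq G), 1 <= r ->
    enum_ball L r s1 -> enum_ball L (2 * r) s2 ->
    (size s2)%:R <= C * (size s1)%:R.

(* Main.v *)
Require Import Defs.
From HB Require Import structures.
From mathcomp Require Import all_boot all_order all_algebra.
From mathcomp Require Import reals.
From mathcomp Require Import zify ring lra.
Import Order.TTheory GRing.Theory Num.Theory.
Local Open Scope ring_scope.

Definition vp (p : nat) (k : int) : nat := logn p `|k|%N.

Lemma padic_gc (p n : nat) (k : int) : prime p -> k != 0 ->
  padic_norm p (gamma_coord p n k) = p%:R ^+ n / p%:R ^+ vp p k.
Proof.
move=> hp hk.
have p0 : (0 < p)%N by apply: prime_gt0.
have pR : (p%:R : rat) != 0 by rewrite pnatr_eq0 -lt0n.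
set r := gamma_coord p n k.
have hr : r != 0.
  by rewrite /r /gamma_coord mulf_neq0 ?invr_eq0 ?expf_neq0 ?intr_eq0.
rewrite /padic_norm (negbTE hr).
have e : numq r * (p ^ n)%N%:Z = k * denq r.
  apply/eqP; rewrite -(@eqr_int rat) !rmorphM /=.
  rewrite -eqr_div ?intr_eq0 ?denq_neq0 ?pnatr_eq0 ?expn_eq0 -?lt0n ?p0 //.
  by rewrite divq_num_den /r /gamma_coord -pmulrn natrX.
  by rewrite expn_gt0 p0.
have e2 : (`|numq r| * p ^ n = `|k| * `|denq r|)%N.
  by have := congr1 absz e; rewrite !abszM.
have e3 := congr1 (logn p) e2.
rewrite lognM ?expn_gt0 ?p0 ?absz_gt0 ?numq_eq0 // in e3.
rewrite lognM ?absz_gt0 ?denq_neq0 // pfactorK // in e3.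
apply/eqP; rewrite eqr_div ?expf_neq0 // -!exprD; apply/eqP; congr (_ ^+ _).
rewrite /vp; lia.
Qed.

Definition f1 (R : realType) (p n : nat) (k : int) : R :=
  if k == 0 then 0 else `|k|%:~R / (p%:R ^+ n) + (p%:R ^+ n) / (p%:R ^+ vp p k).

Lemma ratr_Lp (R : realType) p n k : prime p ->
  ratr (Lp p (gamma_coord p n k)) = f1 R p n k.
Proof.
move=> hp; rewrite /f1 /Lp; case: eqP => [->|/eqP hk].
  by rewrite /gamma_coord /padic_norm mul0r normr0 eqxx addr0 rmorph0.
have p0 : (0 < p)%N by apply: prime_gt0.
rewrite padic_gc // rmorphD /= ratr_norm /gamma_coord !fmorph_div /= ratr_int.
rewrite !rmorphXn /= ratr_nat normf_div intr_norm normrX ger0_norm ?ler0n //.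
Qed.

Lemma LSigmaE (R : realType) p n g : prime p ->
  LSigma R p n g = f1 R p n g.1 + f1 R p n g.2.
Proof. by move=> hp; rewrite /LSigma rmorphD /= !ratr_Lp. Qed.

Lemma pR_gt1 (R : realType) p : prime p -> 1 < (p%:R : R).
Proof. by move=> hp; rewrite ltr1n prime_gt1. Qed.

Lemma pX_gt0 (R : realType) p m : prime p -> 0 < (p%:R : R) ^+ m.
Proof. by move=> hp; rewrite exprn_gt0 // ltr0n prime_gt0. Qed.

Lemma divX_le (R : realType) p n m v : prime p -> (m <= v)%N ->
  (p%:R : R) ^+ n / p%:R ^+ v <= p%:R ^+ n / p%:R ^+ m.
Proof.
move=> hp hmv; apply: ler_wpM2l; first exact/ltW/pX_gt0.
rewrite lef_pV2 ?posrE ?pX_gt0 // ler_eXn2l //; exact: pR_gt1.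
Qed.

Lemma f1_ge0 (R : realType) p n k : prime p -> 0 <= f1 R p n k.
Proof.
move=> hp; rewrite /f1; case: eqP => // _.
by rewrite addr_ge0 // divr_ge0 ?ler0z ?normr_ge0 ?ltW ?pX_gt0.
Qed.

Lemma f1_gt0 (R : realType) p n k : prime p -> k != 0 -> 0 < f1 R p n k.
Proof.
move=> hp hk; rewrite /f1 (negbTE hk).
by rewrite ltr_wpDl // ?divr_ge0 ?ler0z ?normr_ge0 ?ltW ?pX_gt0 // divr_gt0 ?pX_gt0.
Qed.

Lemma f1N (R : realType) p n k : f1 R p n (- k) = f1 R p n k.
Proof. by rewrite /f1 oppr_eq0 normrN /vp abszN. Qed.

Lemma f1_abs (R : realType) p n k : prime p ->
  `|k|%:~R / (p%:R ^+ n) <= f1 R p n k.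
Proof.
move=> hp; rewrite /f1; case: eqP => [->|_]; first by rewrite normr0 mul0r.
by rewrite lerDl divr_ge0 ?ltW ?pX_gt0.
Qed.

Lemma f1_val (R : realType) p n k : prime p -> k != 0 ->
  (p%:R : R) ^+ n / p%:R ^+ vp p k <= f1 R p n k.
Proof.
move=> hp hk; rewrite /f1 (negbTE hk).
by rewrite lerDr divr_ge0 ?ler0z ?normr_ge0 ?ltW ?pX_gt0.
Qed.

Lemma vp_dvd p m k : prime p -> k != 0 -> ((p ^ m)%:Z %| k)%Z = (m <= vp p k)%N.
Proof. by move=> hp hk; rewrite dvdzE /= pfactor_dvdn // absz_gt0. Qed.

Lemma f1D (R : realType) p n a b : prime p ->
  f1 R p n (a + b) <= f1 R p n a + f1 R p n b.
Proof.
move=> hp.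
have [->|ha] := eqVneq a 0; first by rewrite add0r /f1 eqxx add0r.
have [->|hb] := eqVneq b 0; first by rewrite addr0 /f1 eqxx addr0.
have [->|hab] := eqVneq (a + b) 0.
  by rewrite /f1 eqxx addr_ge0 ?f1_ge0.
rewrite /f1 (negbTE ha) (negbTE hb) (negbTE hab).
rewrite addrACA lerD //.
  rewrite -mulrDl ler_wpM2r //; first by rewrite invr_ge0 ltW ?pX_gt0.
  by rewrite !intr_norm rmorphD /=; apply: ler_normD.
set m := minn (vp p a) (vp p b).
have hm : (m <= vp p (a + b))%N.
  rewrite -vp_dvd // rpredD // vp_dvd // /m ?geq_minl ?geq_minr //.
apply: le_trans (@divX_le R p n _ _ hp hm) _.
rewrite /m; case: leqP => _.
  by rewrite lerDl divr_ge0 ?ltW ?pX_gt0.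
by rewrite lerDr divr_ge0 ?ltW ?pX_gt0.
Qed.

Lemma length_part (R : realType) p n : prime p -> is_length_function (@LSigma R p n).
Proof.
move=> hp; split; [|split; [|split]].
- by move=> g; rewrite LSigmaE // addr_ge0 ?f1_ge0.
- move=> [a b]; rewrite LSigmaE //=; split; last first.
    by case=> -> ->; rewrite /f1 eqxx addr0.
  move=> h.
  have [ha|ha] := eqVneq a 0; have [hb|hb] := eqVneq b 0.
  + by rewrite ha hb.
  + by move: h; rewrite ha /f1 eqxx add0r => /eqP; rewrite -/(f1 R p n b) gt_eqF ?f1_gt0.
  + by move: h; rewrite hb /f1 eqxx addr0 => /eqP; rewrite -/(f1 R p n a) gt_eqF ?f1_gt0.
  + have := ltr_wpDr (f1_ge0 R p n b hp) (f1_gt0 R p n a hp ha).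
    by rewrite h ltxx.
- by move=> [a b]; rewrite !LSigmaE //= !f1N.
- move=> [a b] [c d]; rewrite !LSigmaE //=.
  by rewrite addrACA lerD // f1D.
Qed.

Definition box (M : nat) : seq int := [seq i%:Z - M%:Z | i <- iota 0 M.*2.+1].

Lemma box_uniq M : uniq (box M).
Proof. by rewrite map_inj_uniq ?iota_uniq // => i j /addIr /eqP; rewrite eqz_nat => /eqP. Qed.

Lemma mem_box M k : (`|k| <= M)%N -> k \in box M.
Proof.
move=> hk; apply/mapP; exists (absz (k + M%:Z)); last by lia.
by rewrite mem_iota; lia.
Qed.

Lemma proper_part (R : realType) p n : prime p -> is_proper (@LSigma R p n).
Proof.
move=> hp r.
set N : R := p%:R ^+ n.
have N0 : 0 < N by apply: pX_gt0.
set x := Num.max 0 (r * N).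
have x0 : 0 <= x by rewrite le_max lexx.
set M := Num.Def.archi_bound x.
have hM := archi_boundP x0.
have bd : forall k, f1 R p n k <= r -> (`|k| <= M)%N.
  move=> k hk.
  have h1 := le_trans (f1_abs R p n k hp) hk.
  rewrite ler_pdivrMr // in h1.
  have h2 : (`|k|%:~R : R) < M%:R.
    apply: le_lt_trans h1 _; apply: le_lt_trans hM; by rewrite le_max lexx orbT.
  by rewrite -natr_absz ltr_nat in h2; apply: ltnW.
exists [seq g <- [seq (i, j) | i <- box M, j <- box M] | LSigma R p n g <= r].
split.
  by rewrite filter_uniq // allpairs_uniq ?box_uniq // => -[? ?] [? ?] _ _ [-> ->].
move=> [a b]; rewrite mem_filter; split; first by case/andP.
move=> h; rewrite h /=.
have ha : f1 R p n a <= r.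
  by apply: le_trans h; rewrite LSigmaE // lerDl f1_ge0.
have hb : f1 R p n b <= r.
  by apply: le_trans h; rewrite LSigmaE // lerDr f1_ge0.
exact: (allpairs_f (fun i j => (i, j)) (@mem_box _ _ (bd a ha)) (@mem_box _ _ (bd b hb))).
Qed.

Definition tq (D : nat) (k : int) : int :=
  if k < 0 then - ((`|k| %/ D)%N%:Z) else ((`|k| %/ D)%N%:Z).

Lemma tq_abs D k : (`|tq D k| = `|k| %/ D)%N.
Proof. by rewrite /tq; case: ifP => _; rewrite ?abszN. Qed.

Lemma tq_rem D k : (0 < D)%N -> (absz (k - (D%:Z * tq D k))%R < D)%N.
Proof.
move=> D0; have := divn_eq `|k| D; have := ltn_pmod `|k| D0.
rewrite /tq; set x := (`|k| %/ D)%N; set y := (`|k| %% D)%N.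
case: ifP => hk; nia.
Qed.

Definition phi (p b : nat) (k : int) : int := (p ^ b)%N%:Z * tq (8 * p ^ b) k.
Definition rho (p b : nat) (k : int) : nat :=
  absz (modz (divz k (p ^ (b - 3))%N%:Z) (16 * p ^ 3)%N%:Z).

Lemma phi_ball (R : realType) p n (s : R) b k : prime p -> 0 < s ->
  2 * (p%:R ^+ n) / s <= p%:R ^+ b -> f1 R p n k <= 4 * s ->
  f1 R p n (phi p b k) <= s.
Proof.
move=> hp hs hb1 hk.
have p0 : (0 < p)%N by apply: prime_gt0.
have [->|h0] := eqVneq (phi p b k) 0; first by rewrite /f1 eqxx ltW.
have N0 : 0 < (p%:R : R) ^+ n by apply: pX_gt0.
have h8 : (8 * `|phi p b k| <= `|k|)%N.
  rewrite /phi abszM tq_abs /= mulnA.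
  by rewrite mulnC; apply: leq_divM.
have h8R : 8 * (`|phi p b k|%:~R : R) <= `|k|%:~R.
  by rewrite -!natr_absz -natrM ler_nat.
have hv : (b <= vp p (phi p b k))%N.
  by rewrite -vp_dvd // dvdz_mulr.
have e1 := f1_abs R p n k hp.
have e2 := @divX_le R p n _ _ hp hv.
rewrite /f1 (negbTE h0).
have e3 : (p%:R : R) ^+ n / p%:R ^+ b <= s / 2.
  rewrite ler_pdivrMr ?pX_gt0 //.
  rewrite ler_pdivrMr // in hb1.
  nra.
have e4 : `|phi p b k|%:~R / (p%:R : R) ^+ n <= s / 2.
  rewrite ler_pdivrMr //.
  rewrite ler_pdivrMr // in e1.
  nra.
lra.
Qed.

Lemma p3_ge8 (R : realType) p : prime p -> 8 <= (p%:R : R) ^+ 3.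
Proof.
move=> hp; have p2 := prime_gt1 hp.
have h : (2 ^ 3 <= p ^ 3)%N by rewrite leq_exp2r.
by rewrite -natrX ler_nat.
Qed.

Lemma phi_dvd (R : realType) p n (s : R) b k : prime p -> 0 < s ->
  ((0 < b)%N -> p%:R ^+ (b - 1) < 2 * p%:R ^+ n / s) ->
  f1 R p n k <= 4 * s -> ((p ^ (b - 3))%N%:Z %| k)%Z.
Proof.
move=> hp hs hb2 hk.
have [->|k0] := eqVneq k 0; first exact: dvdz0.
rewrite vp_dvd //.
have [hb3|hb3] := leqP b 3; first by have -> : (b - 3 = 0)%N by lia.
have h := hb2 (ltn_trans (isT : (0 < 3)%N) hb3).
have e := le_trans (f1_val R p n k hp k0) hk.
have N0 : 0 < (p%:R : R) ^+ n by apply: pX_gt0.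
have V0 : 0 < (p%:R : R) ^+ vp p k by apply: pX_gt0.
rewrite ler_pdivrMr // in e.
have h8 := @p3_ge8 R p hp.
have e2 : 2 * p%:R ^+ n / s <= p%:R ^+ (vp p k + 3).
  rewrite ler_pdivrMr // exprD.
  have : 2 * (p%:R : R) ^+ n <= 8 * (p%:R ^+ vp p k * s) by nra.
  move/le_trans; apply.
  have := ler_wpM2r (ltW (mulr_gt0 V0 hs)) h8; lra.
have := lt_le_trans h e2.
rewrite ltr_eXn2l ?pR_gt1 //.
lia.
Qed.

Lemma abs_tri2 (k k' t : int) (D : nat) : (absz (k - t) < D)%N ->
  (absz (k' - t) < D)%N -> (absz (k - k') < 2 * D)%N.
Proof. lia. Qed.

Lemma phi_inj (R : realType) p n (s : R) b k k' : prime p -> 0 < s ->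
  ((0 < b)%N -> p%:R ^+ (b - 1) < 2 * p%:R ^+ n / s) ->
  f1 R p n k <= 4 * s -> f1 R p n k' <= 4 * s ->
  phi p b k = phi p b k' -> rho p b k = rho p b k' -> k = k'.
Proof.
move=> hp hs hb2 hk hk' ephi erho.
have p0 : (0 < p)%N by apply: prime_gt0.
have d1 := @phi_dvd R p n s b k hp hs hb2 hk.
have d2 := @phi_dvd R p n s b k' hp hs hb2 hk'.
set D := (8 * p ^ b)%N.
have D0 : (0 < D)%N by rewrite /D muln_gt0 expn_gt0 p0.
have etq : tq D k = tq D k'.
  apply: (@mulfI _ ((p ^ b)%N%:Z)); last exact: ephi.
  have pb : (0 < p ^ b)%N by rewrite expn_gt0 p0.
  by apply/eqP; lia.
have r1 := @tq_rem D k D0.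
have r2 := @tq_rem D k' D0.
rewrite -etq in r2.
have hdiff : (absz (k - k') < 2 * D)%N.
  exact: abs_tri2 r1 r2.
set P := (p ^ (b - 3))%N.
set Mm := (16 * p ^ 3)%N.
have Mm0 : (Mm%:Z != 0).
  have pb : (0 < p ^ 3)%N by rewrite expn_gt0 p0.
  by apply/eqP; rewrite /Mm; lia.
have em : modz (divz k P%:Z) Mm%:Z = modz (divz k' P%:Z) Mm%:Z.
  have h1 : (rho p b k)%:Z = modz (divz k P%:Z) Mm%:Z.
    by rewrite /rho gez0_abs // modz_ge0.
  have h2 : (rho p b k')%:Z = modz (divz k' P%:Z) Mm%:Z.
    by rewrite /rho gez0_abs // modz_ge0.
  by rewrite -h1 -h2 erho.
have hd : ((Mm * P)%N%:Z %| k - k')%Z.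
  have := eqz_mod_dvd Mm%:Z (divz k P%:Z) (divz k' P%:Z).
  rewrite em eqxx => /esym hm.
  have := dvdz_mul hm (dvdzz P%:Z).
  by rewrite mulrBl !divzK // PoszM.
have hle : (2 * D <= Mm * P)%N.
  have : (p ^ b <= p ^ 3 * p ^ (b - 3))%N.
    by rewrite -expnD leq_pexp2l // -leq_subLR.
  by rewrite /D /Mm /P mulnA -[(16 * _ * _)%N]mulnA leq_mul2l.
apply/eqP; rewrite -subr_eq0; apply/negPn/negP => hne.
rewrite dvdzE /= in hd.
have := dvdn_leq _ hd; rewrite absz_gt0 hne => /(_ isT) hl.
by have := leq_ltn_trans (leq_trans hle hl) hdiff; rewrite ltnn.
Qed.

Lemma rho_lt p b k : prime p -> (rho p b k < 16 * p ^ 3)%N.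
Proof.
move=> hp; have p0 : (0 < p)%N by apply: prime_gt0.
have pb : (0 < 16 * p ^ 3)%N by rewrite muln_gt0 expn_gt0 p0.
rewrite /rho -ltz_nat gez0_abs ?modz_ge0 ?ltz_pmod //.
by apply/eqP; lia.
Qed.

Lemma const_le (R : realType) p : prime p ->
  ((16 * p ^ 3) * (16 * p ^ 3))%N%:R <= (4 * (p%:R : R) ^+ 8) ^+ 4.
Proof.
move=> hp; have p0 : (0 < p)%N by apply: prime_gt0.
have -> : (4 * (p%:R : R) ^+ 8) ^+ 4 = ((4 * p ^ 8) ^ 4)%N%:R by rewrite natrX natrM natrX.
rewrite ler_nat expnMn -expnM mulnACA -expnD.
by rewrite (_ : (16 * 16 = 4 ^ 4)%N) // leq_mul2l leq_pexp2l.
Qed.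

Lemma doubling_part (R : realType) p n : prime p ->
  forall (r : R) (s1 s2 : seq (int * int)), 1 <= r ->
    enum_ball (@LSigma R p n) r s1 -> enum_ball (@LSigma R p n) (2 * r) s2 ->
    (size s2)%:R <= (4 * (p%:R : R) ^+ 8) ^+ 4 * (size s1)%:R.
Proof.
move=> hp r s1 s2 hr [u1 m1] [u2 m2].
have p0 : (0 < p)%N by apply: prime_gt0.
set s := r / 2.
have hs : 0 < s by rewrite /s; lra.
have N0 : 0 < (p%:R : R) ^+ n by apply: pX_gt0.
have x0 : 0 <= 2 * (p%:R : R) ^+ n / s.
  by rewrite divr_ge0 ?ltW // mulr_gt0.
have exP : exists b, 2 * (p%:R : R) ^+ n / s <= p%:R ^+ b.
  exists (Num.Def.archi_bound (2 * (p%:R : R) ^+ n / s)).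
  apply: ltW; apply: lt_le_trans (archi_boundP x0) _.
  set K := Num.Def.archi_bound _.
  have -> : (p%:R : R) ^+ K = (p ^ K)%N%:R by rewrite natrX.
  by rewrite ler_nat ltnW // ltn_expl // prime_gt1.
case: (ex_minnP exP) => b hb1 hmin.
have hb2 : (0 < b)%N -> (p%:R : R) ^+ (b - 1) < 2 * p%:R ^+ n / s.
  move=> b0; rewrite ltNge; apply/negP => h.
  have := hmin _ h; lia.
set Mm := (16 * p ^ 3)%N.
pose psi (g : int * int) := ((phi p b g.1, phi p b g.2), (rho p b g.1, rho p b g.2)).
have hball : forall g, g \in s2 -> f1 R p n g.1 <= 4 * s /\ f1 R p n g.2 <= 4 * s.
  move=> g /m2; rewrite LSigmaE // => h.
  have := f1_ge0 R p n g.1 hp; have := f1_ge0 R p n g.2 hp.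
  rewrite /s; split; lra.
have sub : {subset map psi s2 <=
   [seq (x, y) | x <- s1, y <- [seq (i, j) | i <- iota 0 Mm, j <- iota 0 Mm]]}.
  move=> z /mapP [g gin ->].
  have [h1 h2] := hball g gin.
  apply/allpairsP; exists ((phi p b g.1, phi p b g.2), (rho p b g.1, rho p b g.2)).
  split => //=.
    apply/m1; rewrite LSigmaE //=.
    have := @phi_ball R p n s b _ hp hs hb1 h1; have := @phi_ball R p n s b _ hp hs hb1 h2.
    rewrite /s; lra.
  apply/allpairsP; exists (rho p b g.1, rho p b g.2).
  by rewrite /= !mem_iota /= !rho_lt.
have uq : uniq (map psi s2).
  rewrite map_inj_in_uniq // => g g' gin gin' [e1 e2 e3 e4].
  have [h1 h2] := hball g gin.
  have [h1' h2'] := hball g' gin'.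
  case: g e1 e2 e3 e4 gin h1 h2 => a b' /= e1 e2 e3 e4 _ h1 h2.
  case: g' e1 e2 e3 e4 gin' h1' h2' => a' b'' /= e1 e2 e3 e4 _ h1' h2'.
  by rewrite (@phi_inj R p n s b _ _ hp hs hb2 h1 h1' e1 e3) (@phi_inj R p n s b _ _ hp hs hb2 h2 h2' e2 e4).
have := uniq_leq_size uq sub.
rewrite size_map !size_allpairs !size_iota => hsz.
apply: le_trans (_ : ((size s1 * (Mm * Mm))%N%:R <= _)).
  by rewrite ler_nat.
rewrite natrM mulrC ler_wpM2r ?ler0n //.
exact: const_le.
Qed.

Theorem corollary3p17 (R : realType) (p n : nat) (hp : prime p) :
  is_length_function (@LSigma R p n) /\
  is_proper (@LSigma R p n) /\
  bounded_doubling (@LSigma R p n) ((4 * (p%:R : R) ^+ 8) ^+ 4).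
Proof.
split; first exact: length_part.
split; first exact: proper_part.
split; first exact: proper_part.
exact: doubling_part.
Qed.
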